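(* Let $L$ be a positive integer, let $r$ be a positive integer with $\mathrm{degree}(r) < L$, and let $p = 2^L \oplus r$. For every positive integer $w$, the degree of $w \star 2^L \bmod p$ is at most $\mathrm{degree}(w) + \mathrm{degree}(r)$. Moreover, if $\mathrm{degree}(w) + \mathrm{degree}(r) < L$, then the degree of $w \star 2^L \bmod p$ is exactly $\mathrm{degree}(w) + \mathrm{degree}(r)$.
   Context: All operations are carry-less. For nonnegative integers $a,b$, with $a_i$ the $i$-th least significant bit of $a$, the carry-less product $a \star b$ is the integer whose $i$-th bit is $\bigoplus_{k=0}^{i} a_{i-k} b_k$; $\oplus$ is bitwise XOR. For a positive integer $x$, $\mathrm{degree}(x)$ is the index (starting at $0$) of its most significant nonzero bit; by convention $\mathrm{degree}(0) = -\infty$. For integers $a$ and $b \neq 0$ there are unique integers $\alpha,\beta$ with $a = \alpha \star b \oplus \beta$ and $\beta = 0$ or $\mathrm{degree}(\beta) < \mathrm{degree}(b)$; one writes $a \div b = \alpha$ and $a \bmod b = \beta$. Precedence: $\star$, $\bmod$, $\div$ first, then $\oplus$. *)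

(* Defs.v *)
(* carry-less arithmetic on natural numbers (GF(2)[x] encoded in bits). *)
From Stdlib Require Import Arith List Lia Bool.
Import ListNotations.
Open Scope bool_scope.
Open Scope nat_scope.

Definition xorl (l : list bool) : bool := fold_right xorb false l.

Definition bit (a i : nat) : bool := Nat.testbit a i.

Definition clmul_bit (a b i : nat) : bool :=
  xorl (map (fun k => andb (bit a (i - k)) (bit b k)) (seq 0 (S i))).

(* a ⋆ b : the integer whose i-th bit is clmul_bit a b i.  Bits of index
   >= a + b are zero (since a < 2^a, b < 2^b), so summing i < a + b + 1 is exact. *)
Definition clmul (a b : nat) : nat :=
  fold_right Nat.add 0
    (map (fun i => if clmul_bit a b i then 2 ^ i else 0) (seq 0 (a + b + 1))).

Definition clxor (a b : nat) : nat := Nat.lxor a b.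

(* degree: index of the most significant nonzero bit; degree 0 = -oo (None) *)
Definition degree (x : nat) : option nat :=
  match x with 0 => None | S _ => Some (Nat.log2 x) end.

Definition deg_le (x n : nat) : Prop :=
  match degree x with None => True | Some d => d <= n end.

(* carry-less remainder by long division: while degree a >= degree b,
   replace a by a ⊕ (b shifted by degree a - degree b).  The fuel a + 1 suffices
   since each step strictly lowers the degree. *)
Fixpoint clmod_aux (fuel a b : nat) : nat :=
  match fuel with
  | 0 => a
  | S f =>
      if (a =? 0) || (Nat.log2 a <? Nat.log2 b) then a
      else clmod_aux f (Nat.lxor a (Nat.shiftl b (Nat.log2 a - Nat.log2 b))) b
  end.

(* a mod b for b <> 0: the unique beta with a = alpha ⋆ b ⊕ beta, beta = 0 or degree beta < degree b *)
Definition clmod (a b : nat) : nat := clmod_aux (S a) a b.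

(* Main.v *)
Require Import Defs.
From Stdlib Require Import Arith List Lia Bool.
Import ListNotations.

Lemma pw_pos k : 0 < 2^k.
Proof. apply Nat.neq_0_lt_0, Nat.pow_nonzero; lia. Qed.

Lemma dec_div k h c : c < 2^k -> (h*2^k+c)/2^k = h.
Proof. intro H. pose proof (pw_pos k). rewrite Nat.div_add_l by lia.
  rewrite Nat.div_small by lia. lia. Qed.

Lemma dec_mod k h c : c < 2^k -> (h*2^k+c) mod 2^k = c.
Proof. intro H. pose proof (pw_pos k).
  rewrite Nat.add_comm, Nat.Div0.mod_add. apply Nat.mod_small; auto. Qed.

Lemma lxor_div x y k : Nat.lxor x y / 2^k = Nat.lxor (x/2^k) (y/2^k).
Proof. apply Nat.bits_inj; intro i. rewrite Nat.div_pow2_bits, !Nat.lxor_spec, !Nat.div_pow2_bits. auto. Qed.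

Lemma lxor_mod x y k : Nat.lxor x y mod 2^k = Nat.lxor (x mod 2^k) (y mod 2^k).
Proof. apply Nat.bits_inj; intro i. rewrite Nat.lxor_spec.
  destruct (Nat.lt_ge_cases i k).
  - rewrite !Nat.mod_pow2_bits_low, Nat.lxor_spec by auto. auto.
  - rewrite !Nat.mod_pow2_bits_high by auto. auto. Qed.

Lemma lx k h c h' c' : c < 2^k -> c' < 2^k ->
  Nat.lxor (h*2^k+c) (h'*2^k+c') = Nat.lxor h h' * 2^k + Nat.lxor c c'
  /\ Nat.lxor c c' < 2^k.
Proof. intros H1 H2. pose proof (pw_pos k).
  set (X := Nat.lxor (h*2^k+c) (h'*2^k+c')).
  assert (E : X = 2^k * (X / 2^k) + X mod 2^k) by (apply Nat.div_mod; lia).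
  assert (Ed : X / 2^k = Nat.lxor h h') by (unfold X; rewrite lxor_div, !dec_div; auto).
  assert (Em : X mod 2^k = Nat.lxor c c') by (unfold X; rewrite lxor_mod, !dec_mod; auto).
  split.
  - rewrite E, Ed, Em. lia.
  - rewrite <- Em. apply Nat.mod_upper_bound. lia.
Qed.

Lemma top x : 0 < x -> x = 1*2^(Nat.log2 x) + (x - 2^(Nat.log2 x)) /\ x - 2^(Nat.log2 x) < 2^(Nat.log2 x).
Proof. intro H. pose proof (Nat.log2_spec x H). rewrite Nat.pow_succ_r' in H0. lia. Qed.

Lemma log2_dec q L c : 0 < q -> c < 2^L -> Nat.log2 (q*2^L + c) = Nat.log2 q + L.
Proof. intros Hq Hc. pose proof (Nat.log2_spec q Hq). apply Nat.log2_unique; [lia|].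
  rewrite Nat.pow_succ_r', !Nat.pow_add_r. rewrite Nat.pow_succ_r' in H.
  destruct H as [H1 H2]. split.
  - pose proof (Nat.mul_le_mono_r _ _ (2^L) H1). lia.
  - assert (q+1 <= 2 * 2^Nat.log2 q) by lia.
    pose proof (Nat.mul_le_mono_r _ _ (2^L) H). lia.
Qed.

Lemma xorl_app l1 l2 : xorl (l1 ++ l2) = xorb (xorl l1) (xorl l2).
Proof. induction l1; simpl. auto. rewrite IHl1, xorb_assoc. auto. Qed.

Lemma clmul_bit_pow w L i : clmul_bit w (2^L) i = Nat.testbit (w*2^L) i.
Proof.
  unfold clmul_bit, bit.
  assert (G : forall n, xorl (map (fun k => Nat.testbit w (i - k) && Nat.testbit (2^L) k) (seq 0 n))
     = (L <? n) && Nat.testbit w (i - L)).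
  { induction n. simpl. auto.
    rewrite seq_S, map_app, xorl_app, IHn. simpl. rewrite Nat.pow2_bits_eqb.
    destruct (Nat.eq_dec L n).
    - subst. rewrite Nat.eqb_refl, Nat.ltb_irrefl. replace (n <? S n) with true by (symmetry; apply Nat.ltb_lt; lia).
      destruct (Nat.testbit w (i-n)); auto.
    - replace (L =? n) with false by (symmetry; apply Nat.eqb_neq; auto).
      destruct (L <? n) eqn:E1; destruct (L <? S n) eqn:E2;
       rewrite ?Nat.ltb_lt, ?Nat.ltb_ge in *; try lia; simpl; rewrite ?andb_false_r; auto.
      destruct (Nat.testbit w (i-L)); auto. }
  rewrite G. destruct (Nat.lt_ge_cases i L).
  - rewrite Nat.mul_pow2_bits_low by auto. replace (L <? S i) with false by (symmetry; apply Nat.ltb_ge; lia). auto.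
  - rewrite Nat.mul_pow2_bits_high by auto. replace (L <? S i) with true by (symmetry; apply Nat.ltb_lt; lia). auto.
Qed.

Lemma sum_bits x N : list_sum (map (fun i => if Nat.testbit x i then 2^i else 0) (seq 0 N)) = x mod 2^N.
Proof.
  induction N. simpl. auto.
  rewrite seq_S, map_app, list_sum_app, IHN. simpl.
  replace (2 ^ N + (2 ^ N + 0)) with (2^N*2) by lia. rewrite Nat.Div0.mod_mul_r.
  pose proof (Nat.testbit_spec' x N). destruct (Nat.testbit x N); simpl in *; lia.
Qed.

Lemma clmul_pow w L : clmul w (2^L) = w * 2^L.
Proof.
  unfold clmul. change (fold_right Nat.add 0 (map ?f ?s)) with (list_sum (map f s)).
  rewrite (map_ext _ (fun i => if Nat.testbit (w*2^L) i then 2^i else 0)).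
  2:{ intro i. rewrite clmul_bit_pow. auto. }
  rewrite sum_bits. apply Nat.mod_small. rewrite !Nat.pow_add_r.
  pose proof (Nat.pow_gt_lin_r 2 w ltac:(lia)).
  pose proof (Nat.pow_gt_lin_r 2 (2^L) ltac:(lia)).
  pose proof (pw_pos L). pose proof (pw_pos w).
  assert (w * 2^L <= 2^w * 2^(2^L)) by (apply Nat.mul_le_mono; lia).
  rewrite Nat.pow_1_r. nia.
Qed.

Lemma log2_mulpow b s : 0 < b -> Nat.log2 (b * 2^s) = Nat.log2 b + s.
Proof. intro. rewrite <- (Nat.add_0_r (b*2^s)). apply log2_dec; auto. apply pw_pos. Qed.

Lemma gen f : forall a b, 0 < b -> a < f ->
  clmod_aux f a b = 0 \/ Nat.log2 (clmod_aux f a b) < Nat.log2 b.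
Proof.
  induction f; intros a b Hb Ha. lia.
  simpl. destruct ((a =? 0) || (Nat.log2 a <? Nat.log2 b)) eqn:E.
  - apply orb_true_iff in E. destruct E as [E|E]; [left; apply Nat.eqb_eq; auto | right; apply Nat.ltb_lt; auto].
  - apply orb_false_iff in E. destruct E as [E1 E2]. apply Nat.eqb_neq in E1. apply Nat.ltb_ge in E2.
    apply IHf; auto.
    rewrite Nat.shiftl_mul_pow2.
    set (k := Nat.log2 a).
    assert (Hk : Nat.log2 (b * 2 ^ (k - Nat.log2 b)) = k) by (rewrite log2_mulpow; lia).
    destruct (top a ltac:(lia)) as [Ea Ha'].
    assert (0 < b * 2 ^ (k - Nat.log2 b)) by (pose proof (pw_pos (k - Nat.log2 b)); nia).
    destruct (top _ H) as [Eb Hb']. rewrite Hk in Eb, Hb'. fold k in Ea, Ha'.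
    rewrite Ea at 1. rewrite Eb. destruct (lx k 1 _ 1 _ Ha' Hb') as [-> Hl].
    rewrite Nat.lxor_nilpotent. lia.
Qed.

Lemma step L r f q c : 0 < q -> c < 2^L -> r * 2^(Nat.log2 q) < 2^L -> Nat.log2 (2^L + r) = L ->
  clmod_aux (S f) (q*2^L + c) (2^L + r) =
  clmod_aux f ((q - 2^(Nat.log2 q))*2^L + Nat.lxor c (r*2^(Nat.log2 q))) (2^L + r)
  /\ Nat.lxor c (r*2^(Nat.log2 q)) < 2^L.
Proof.
  intros Hq Hc Hr HP. set (d := Nat.log2 q) in *.
  destruct (lx L 0 c 0 _ Hc Hr) as [_ Hl]. split; auto.
  simpl. rewrite log2_dec by auto. fold d. rewrite HP.
  replace (q*2^L + c =? 0) with false by (symmetry; apply Nat.eqb_neq; nia).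
  replace (d + L <? L) with false by (symmetry; apply Nat.ltb_ge; lia). simpl.
  f_equal. rewrite Nat.shiftl_mul_pow2. replace (d+L-L) with d by lia.
  replace ((2^L + r) * 2^d) with (2^d*2^L + r*2^d) by ring.
  destruct (lx L q c (2^d) _ Hc Hr) as [-> _]. f_equal. f_equal.
  destruct (top q Hq) as [Eq Hq']. fold d in Eq, Hq'. 
  destruct (lx d 1 _ 1 0 Hq' ltac:(pose proof (pw_pos d); lia)) as [E _].
  rewrite <- Eq in E. replace (1*2^d+0) with (2^d) in E by lia. rewrite E.
  rewrite Nat.lxor_nilpotent, Nat.lxor_0_r. lia.
Qed.

Lemma inv L r dw f : forall q c, Nat.log2 r + dw < L -> 0 < r -> Nat.log2 (2^L + r) = L ->
  q*2^L + c < f -> q < 2^dw -> 2^(dw + Nat.log2 r) <= c < 2^(S (dw + Nat.log2 r)) ->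
  Nat.log2 (clmod_aux f (q*2^L+c) (2^L+r)) = dw + Nat.log2 r /\ 0 < clmod_aux f (q*2^L+c) (2^L+r).
Proof.
  set (dr := Nat.log2 r). set (K := dw + dr).
  induction f; intros q c HKL Hr HP Hf Hq Hc. lia.
  assert (HK : 2^(S K) <= 2^L) by (apply Nat.pow_le_mono_r; unfold K, dr; lia).
  destruct (Nat.eq_dec q 0).
  - subst q. simpl. assert (Nat.log2 c = K) by (apply Nat.log2_unique; lia).
    rewrite HP, H.
    replace (c =? 0) with false by (symmetry; apply Nat.eqb_neq; pose proof (pw_pos K); lia).
    replace (K <? L) with true by (symmetry; apply Nat.ltb_lt; lia). simpl. split; auto.
    pose proof (pw_pos K); lia.
  - set (d := Nat.log2 q).
    assert (Hd : d < dw) by (apply Nat.log2_lt_pow2; lia).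
    pose proof (Nat.log2_spec r Hr) as Hrs. fold dr in Hrs.
    assert (Hrd : r * 2^d < 2^K).
    { apply Nat.lt_le_trans with (2^(S dr) * 2^d). apply Nat.mul_lt_mono_pos_r. apply pw_pos. exact (proj2 Hrs).
      rewrite <- Nat.pow_add_r. apply Nat.pow_le_mono_r; lia. }
    assert (HK2 : 2^K <= 2^S K) by (apply Nat.pow_le_mono_r; lia).
    assert (Hrl : r * 2^d < 2^L) by lia.
    destruct (step L r f q c ltac:(lia) ltac:(lia) Hrl HP) as [-> Hl].
    fold d. destruct (top c ltac:(pose proof (pw_pos K); lia)) as [Ec Hc'].
    assert (Hlc : Nat.log2 c = K) by (apply Nat.log2_unique; lia). rewrite Hlc in Ec, Hc'.
    rewrite Ec. replace (r*2^d) with (0*2^K + r*2^d) by lia.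
    destruct (lx K 1 _ 0 _ Hc' Hrd) as [-> Hl2]. rewrite Nat.lxor_0_r.
    pose proof (Nat.log2_spec q ltac:(lia)). fold d in H.
    apply IHf; auto.
    + assert (Hq1 : q - 2^d + 1 <= q) by (pose proof (pw_pos d); lia).
      pose proof (Nat.mul_le_mono_r _ _ (2^L) Hq1). rewrite Nat.pow_succ_r' in HK.
      rewrite Nat.mul_add_distr_r in H0. revert Hl2 H0. generalize (Nat.lxor (c - 2 ^ K) (r * 2 ^ d)). intros. lia.
    + lia.
    + rewrite Nat.pow_succ_r'. lia.
Qed.

Theorem lemma8 (L r : nat) (hL : 0 < L) (hr : 0 < r) (hdr : Nat.log2 r < L) :
  let p := clxor (2 ^ L) r in
  forall w : nat, 0 < w ->
    deg_le (clmod (clmul w (2 ^ L)) p) (Nat.log2 w + Nat.log2 r) /\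
    (Nat.log2 w + Nat.log2 r < L ->
       degree (clmod (clmul w (2 ^ L)) p) = Some (Nat.log2 w + Nat.log2 r)).
Proof.
  intros p w Hw. rewrite clmul_pow.
  assert (HrL : r < 2^L) by (apply Nat.log2_lt_pow2; lia).
  assert (Ep : p = 2^L + r).
  { unfold p, clxor. pose proof (pw_pos L).
    destruct (lx L 1 0 0 r ltac:(lia) HrL) as [E _].
    replace (1*2^L+0) with (2^L) in E by lia. replace (0*2^L+r) with r in E by lia. rewrite E, Nat.lxor_0_r, Nat.lxor_0_l. lia. }
  assert (HP : Nat.log2 (2^L + r) = L).
  { replace (2^L + r) with (1*2^L + r) by lia. rewrite log2_dec by lia. simpl. lia. }
  rewrite Ep. unfold clmod.
  set (dw := Nat.log2 w). set (dr := Nat.log2 r).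
  destruct (Nat.lt_ge_cases (dw + dr) L) as [HK|HK].
  - pose proof (Nat.log2_spec r hr) as Hrs. pose proof (Nat.log2_spec w Hw) as Hws. fold dr dw in Hrs, Hws.
    assert (Hrd : r * 2^dw < 2^L).
    { apply Nat.lt_le_trans with (2^(S dr) * 2^dw). apply Nat.mul_lt_mono_pos_r. apply pw_pos. exact (proj2 Hrs).
      rewrite <- Nat.pow_add_r. apply Nat.pow_le_mono_r; lia. }
    pose proof (pw_pos L).
    destruct (step L r (w*2^L) w 0 Hw H Hrd HP) as [E _].
    rewrite !Nat.add_0_r, Nat.lxor_0_l in E. fold dw in E. rewrite E.
    assert (Hc : 2^(dw + dr) <= r*2^dw < 2^(S (dw + dr))).
    { rewrite Nat.pow_succ_r', !Nat.pow_add_r. rewrite Nat.pow_succ_r' in Hrs.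
      pose proof (Nat.mul_le_mono_r _ _ (2^dw) (proj1 Hrs)).
      pose proof (proj1 (Nat.mul_lt_mono_pos_r (2^dw) _ _ (pw_pos dw)) (proj2 Hrs)). lia. }
    destruct (inv L r dw (w*2^L) (w - 2^dw) (r*2^dw) ltac:(lia) hr HP) as [E1 E2]; auto.
    + assert (Hq1 : w - 2^dw + 1 <= w) by (pose proof (pw_pos dw); lia).
      pose proof (Nat.mul_le_mono_r _ _ (2^L) Hq1). rewrite Nat.mul_add_distr_r in H0. lia.
    + rewrite Nat.pow_succ_r' in Hws. lia.
    + fold dr in E1. unfold deg_le, degree.
      destruct (clmod_aux (w * 2 ^ L) ((w - 2 ^ dw) * 2 ^ L + r * 2 ^ dw) (2 ^ L + r)).
      lia. rewrite <- E1. split; auto.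
  - destruct (gen (S (w*2^L)) (w*2^L) (2^L+r) ltac:(lia) ltac:(lia)) as [E|E];
    unfold deg_le, degree; destruct (clmod_aux (S (w * 2 ^ L)) (w * 2 ^ L) (2 ^ L + r)); try lia.
Qed.
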